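(* For every $n\ge1$, $$\left(h_{j-i}(X_j,X_{j+1},\dots,X_n)\right)_{1\le i,j\le n}\cdot\left(h_{1-i-j}(X_1,\dots,X_i)\right)_{1\le i,j\le n}=\left(h_{1-i-j}(X_1,\dots,X_n)\right)_{1\le i,j\le n}.$$
   Context: Extended complete homogeneous symmetric functions: for $k\ge0$, $h_k(X_1,\dots,X_m)=\sum_{l_1+\dots+l_m=k,\ l_i\ge0}X_1^{l_1}\cdots X_m^{l_m}$; for $k<0$, $h_k(X_1,\dots,X_m)=(-1)^{m+1}\sum_{l_1+\dots+l_m=k,\ l_i<0}X_1^{l_1}\cdots X_m^{l_m}$. *)

(* Defs.v *)
From mathcomp Require Import all_boot all_order all_algebra.
Set Implicit Arguments. Unset Strict Implicit. Unset Printing Implicit Defensive.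
Import Order.TTheory GRing.Theory Num.Theory.
Local Open Scope ring_scope.

(* Extended complete homogeneous symmetric function h_k(s_0,...,s_{m-1}),
   m = size s, k : int.
   k >= 0 : sum over l : 'I_m -> nat with sum l = k of prod s_i^(l_i).
            (each l_i <= k, so l ranges over {ffun 'I_m -> 'I_(k+1)}).
   k < 0  : (-1)^(m+1) * sum over exponents l_i = - a_i with a_i >= 1,
            sum a_i = -k, of prod s_i^(-a_i)   (each a_i <= |k|). *)
Definition hext (R : unitRingType) (k : int) (s : seq R) : R :=
  let m := size s in
  if (0 <= k)%R then
    \sum_(l : {ffun 'I_m -> 'I_(`|k|%N.+1)} | (\sum_(i < m) (l i : nat))%N == `|k|%N)
       \prod_(i < m) s`_i ^+ (l i)
  else
    (-1) ^+ m.+1 *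
    \sum_(l : {ffun 'I_m -> 'I_(`|k|%N.+1)} |
            ((\sum_(i < m) (l i : nat))%N == `|k|%N) && [forall i, (0 < l i)%N])
       \prod_(i < m) s`_i ^- (l i).

(* Main.v *)
Require Import Defs.
From mathcomp Require Import all_boot all_order all_algebra.
From mathcomp Require Import ring zify.
Import Order.TTheory GRing.Theory Num.Theory.
Local Open Scope ring_scope.

Section H.
Variable R : comUnitRingType.

Definition W (f : R -> nat -> R) (s : seq R) (N : nat) : R :=
  \sum_(l : {ffun 'I_(size s) -> 'I_N.+1} | (\sum_(i < size s) (l i : nat))%N == N)
     \prod_(i < size s) f s`_i (l i).

Lemma prodXn (I : Type) (r : seq I) (P : pred I) (F : I -> nat) :
  \prod_(i <- r | P i) ('X^(F i) : {poly R}) = 'X^(\sum_(i <- r | P i) F i)%N.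
Proof.
by elim/big_rec2: _ => [|i a b _ ->]; rewrite ?expr0 ?exprD.
Qed.

Lemma W_coef f s N :
  W f s N = (\prod_(i < size s) \poly_(a < N.+1) f s`_i a)`_N.
Proof.
under eq_bigr do rewrite poly_def.
rewrite bigA_distr_bigA /= coef_sum /W [LHS]big_mkcond /=.
apply: eq_bigr => g _.
rewrite (eq_bigr (fun i : 'I_(size s) => (f s`_i (g i))%:P * 'X^(g i))); last by move=> i _; rewrite mul_polyC.
rewrite big_split /= -rmorph_prod /= prodXn coefCM coefXn.
by rewrite eq_sym; case: eqP; rewrite ?mulr1 ?mulr0.
Qed.

Lemma prod_addX (I : Type) (r : seq I) (p q : I -> {poly R}) d :
  exists t, \prod_(i <- r) (p i + 'X^d * q i) = \prod_(i <- r) p i + 'X^d * t.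
Proof.
elim/big_rec2: _ => [|i a b _ [t ->]]; first by exists 0; rewrite mulr0 addr0.
exists (p i * t + q i * a + 'X^d * q i * t).
ring.
Qed.

Lemma trunc_coef (m M K : nat) (c : 'I_m -> nat -> R) : (M < K)%N ->
 (\prod_(i<m) \poly_(a < K) c i a)`_M = (\prod_(i<m) \poly_(a < M.+1) c i a)`_M.
Proof.
move=> hMK.
have H i : \poly_(a<K) c i a = \poly_(a < M.+1) c i a
     + 'X^(M.+1) * \poly_(a < K - M.+1) c i (M.+1 + a)%N.
  apply/polyP => k; rewrite coefD coefXnM !coef_poly.
  case: (ltnP k M.+1) => hk.
    by rewrite (leq_trans hk hMK) addr0.
  rewrite add0r subnKC //.
  have -> : (k - M.+1 < K - M.+1)%N = (k < K)%N by lia.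
  by [].
under eq_bigr do rewrite H.
have [t ->] := @prod_addX _ (index_enum 'I_m) (fun i => \poly_(a < M.+1) c i a)
   (fun i => \poly_(a < K - M.+1) c i (M.+1 + a)%N) M.+1.
by rewrite coefD coefXnM ltnSn addr0.
Qed.

Lemma W_rcons f s y N :
  W f (rcons s y) N = \sum_(b < N.+1) f y b * W f s (N - b).
Proof.
rewrite W_coef size_rcons big_ord_recr /= mulrC coefM.
apply: eq_bigr => b _.
rewrite coef_poly ltn_ord nth_rcons ltnn eqxx; congr (_ * _).
have -> : \prod_(i < size s) \poly_(a < N.+1) f (rcons s y)`_(widen_ord (leqnSn (size s)) i) a
   = \prod_(i < size s) \poly_(a < N.+1) f s`_i a.
  by apply: eq_bigr => i _; rewrite /= nth_rcons ltn_ord.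
rewrite (@trunc_coef (size s) (N - b) N.+1 (fun i a => f s`_i a)) ?W_coef //.
by rewrite ltnS leq_subr.
Qed.

Definition fp (x : R) (a : nat) := x ^+ a.
Definition fq (x : R) (a : nat) := if (0 < a)%N then x ^- a else 0.

Lemma hextP N s : hext (Posz N) s = W fp s N.
Proof. by []. Qed.

Lemma hextN K s : hext (Negz K) s = (-1) ^+ (size s).+1 * W fq s K.+1.
Proof.
rewrite /hext /=; congr (_ * _).
rewrite /W big_mkcondr /=; apply: eq_bigr => l _.
case: ifP => [/forallP H|/negbT].
  by apply: eq_bigr => i _; rewrite /fq H.
rewrite negb_forall => /existsP [i Hi].
rewrite (bigD1 i) //= /fq (negbTE Hi) mul0r //.
Qed.

Lemma W_nil f N : W f [::] N = (N == 0)%:R.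
Proof. by rewrite W_coef big_ord0 coef1. Qed.

Lemma Wfp_single y a : W fp [:: y] a = y ^+ a.
Proof.
rewrite (_ : [:: y] = rcons [::] y) // W_rcons big_ord_recr /= subnn W_nil eqxx mulr1 big1 ?add0r //.
move=> b _; rewrite W_nil /=.
have -> : (a - b == 0)%N = false by apply/negbTE; rewrite subn_eq0 -ltnNge ltn_ord.
by rewrite mulr0.
Qed.

Lemma Wfp0 s : W fp s 0 = 1.
Proof.
elim/last_ind: s => [|s y IH]; first by rewrite W_nil.
by rewrite W_rcons big_ord1 /= IH /fp expr0 mulr1.
Qed.

Lemma fqS y b : y \is a GRing.unit -> y * fq y b.+2 = fq y b.+1.
Proof.
move=> hy; rewrite /fq /=.
by rewrite exprS invrM ?unitrX // mulrCA mulrV // mulr1.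
Qed.

Lemma Wfq_rec s y K : y \is a GRing.unit ->
  y * W fq (rcons s y) K.+2 = W fq (rcons s y) K.+1 + W fq s K.+1.
Proof.
move=> hy.
rewrite !W_rcons big_ord_recl [X in _ = X + _]big_ord_recl.
rewrite {1 3}/fq /= !mul0r !add0r mulr_sumr big_ord_recl /=.
rewrite mulrA {1}/fq /= expr1 mulrV // mul1r addrC; congr (_ + _).
apply: eq_bigr => b _; rewrite /bump /= !add1n !subSS mulrA fqS //.
Qed.

Lemma hM_rec (s : seq R) (y : R) K : y \is a GRing.unit ->
  hext (Negz K) (rcons s y) = hext (Negz K) s + y * hext (Negz K.+1) (rcons s y).
Proof.
move=> hy; rewrite !hextN size_rcons mulrCA Wfq_rec // exprS.
ring.
Qed.

Lemma hM_iter (s : seq R) (y : R) K B : y \is a GRing.unit ->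
  hext (Negz K) (rcons s y) =
  \sum_(b < B) y ^+ b * hext (Negz (K + b)) s + y ^+ B * hext (Negz (K + B)) (rcons s y).
Proof.
move=> hy; elim: B => [|B IH]; first by rewrite big_ord0 add0r expr0 mul1r addn0.
rewrite IH (hM_rec _ _ (K + B)) // big_ord_recr /= mulrDr addrA mulrA -exprSr addnS.
by [].
Qed.

Lemma Wfq_zero s K : (K.+1 < size s)%N -> W fq s K.+1 = 0.
Proof.
move=> hK; rewrite /W big1 // => l /eqP Hl.
case: (boolP [exists i, (l i : nat) == 0%N]) => [/existsP [i /eqP Hi]|].
  by rewrite (bigD1 i) //= /fq Hi mul0r.
rewrite negb_exists => /forallP H.
have : (\sum_(i < size s) 1 <= \sum_(i < size s) l i)%N.
  by apply: leq_sum => i _; rewrite lt0n H.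
rewrite sum1_card card_ord Hl; lia.
Qed.

Lemma swap_sum (F : nat -> nat -> R) i n : (i <= n)%N ->
  \sum_(i <= j < n) \sum_(b < (j - i).+1) F j b
  = \sum_(b < n - i) \sum_(i + b <= j < n) F j b.
Proof.
elim: n => [|n IH] hi.
  by rewrite big_geq // (_ : 0 - i = 0)%N // big_ord0.
case: (ltnP n i) => hin.
  have -> : i = n.+1 by apply/eqP; rewrite eqn_leq hi hin.
  by rewrite big_geq // subnn big_ord0.
rewrite big_nat_recr //= subSn //.
have E : forall b : 'I_(n - i).+1, \sum_(i + b <= j < n.+1) F j b
    = \sum_(i + b <= j < n) F j b + F n b.
  move=> b; rewrite big_nat_recr //.
  have := ltn_ord b; lia.
rewrite (eq_bigr _ (fun b _ => E b)) big_split /=; congr (_ + _).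
rewrite big_ord_recr /= [X in _ = _ + X]big_geq ?addr0 ?IH //.
lia.
Qed.

Lemma iota_rc m k : iota m k.+1 = rcons (iota m k) (m + k)%N.
Proof. by rewrite -addn1 iotaD cats1. Qed.

Lemma main_sum (X : nat -> R) n : (0 < n)%N ->
  (forall k, (k < n)%N -> X k \is a GRing.unit) -> forall i c, (i < n)%N ->
  \sum_(i <= j < n) hext (Posz (j - i)) (map X (iota j (n - j)))
       * hext (Negz (j + c)) (map X (iota 0 j.+1))
  = hext (Negz (i + c)) (map X (iota 0 n)).
Proof.
elim: n => [//|n IH] _ hX i c hi.
case: n IH hX hi => [|n] IH hX hi.
  have -> : i = 0%N by lia.
  by rewrite big_nat1 subnn hextP Wfp0 mul1r.
set m := n.+1 in IH hX hi *.
have hX' : forall k, (k < m)%N -> X k \is a GRing.unit by move=> k hk; apply: hX; lia.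
have him : (i <= m)%N by lia.
rewrite big_nat_recr // (_ : (m.+1 - m = 1)%N); last by lia.
rewrite hextP (_ : iota m 1 = [:: m]) // Wfp_single.
have E : forall j, (i <= j < m)%N ->
   hext (Posz (j - i)) (map X (iota j (m.+1 - j))) * hext (Negz (j + c)) (map X (iota 0 j.+1))
   = \sum_(b < (j - i).+1) (X m ^+ b * (W fp (map X (iota j (m - j))) (j - (i + b))
        * hext (Negz (j + c)) (map X (iota 0 j.+1)))).
  move=> j /andP [h1 h2].
  rewrite subSn ?(ltnW h2) // iota_rc (subnKC (ltnW h2)) map_rcons hextP W_rcons mulr_suml.
  by apply: eq_bigr => b _; rewrite subnDA mulrA.
rewrite (eq_big_nat _ _ E) (swap_sum (fun j b => X m ^+ b * (W fp (map X (iota j (m - j))) (j - (i + b)) * hext (Negz (j + c)) (map X (iota 0 j.+1))))) //.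
rewrite iota_rc map_rcons (hM_iter _ _ (i + c) (m - i)) ?hX // add0n.
rewrite (_ : (i + c + (m - i) = m + c)%N); last by lia.
congr (_ + _); apply: eq_bigr => b _.
rewrite -mulr_sumr; congr (_ * _).
rewrite -addnAC -(IH isT hX' (i + b) c); last by have := ltn_ord b; lia.
by apply: eq_big_nat => j _; rewrite hextP.
Qed.
End H.

Lemma negE (a b : nat) : (-1 - a%:Z - b%:Z = Negz (a + b))%R.
Proof. rewrite NegzE; lia. Qed.

Lemma negE2 (j i : nat) : (j < i)%N -> (j%:Z - i%:Z = Negz (i - j.+1))%R.
Proof. move=> h; rewrite NegzE; lia. Qed.

Theorem mainTheorem13 (R : comUnitRingType) (n : nat) (X : nat -> R)
    (hn : (0 < n)%N) (hX : forall k, (k < n)%N -> X k \is a GRing.unit) :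
  (\matrix_(i < n, j < n)
      hext ((j : int) - (i : int)) [seq X k | k <- iota j (n - j)])
  *m
  (\matrix_(i < n, j < n)
      hext (- 1 - (i : int) - (j : int)) [seq X k | k <- iota 0 i.+1])
  =
  \matrix_(i < n, j < n)
      hext (- 1 - (i : int) - (j : int)) [seq X k | k <- iota 0 n].
Proof.
apply/matrixP => i l; rewrite !mxE negE.
under eq_bigr => j _ do rewrite !mxE negE.
rewrite -(big_mkord xpredT (fun j : nat => hext (j%:Z - i%:Z) [seq X k | k <- iota j (n - j)]
   * hext (Negz (j + l)) [seq X k | k <- iota 0 j.+1])).
rewrite (big_cat_nat _ (n := i)) //; last exact: ltnW.
rewrite big_nat_cond big1 ?add0r; last first.
  move=> j /andP [/andP [_ hj] _].
  rewrite negE2 // hextN Wfq_zero ?mulr0 ?mul0r // size_map size_iota.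
  have := ltn_ord i; lia.
rewrite -(@main_sum R X n hn hX) //.
rewrite /= add0r big_nat_cond [RHS]big_nat_cond; apply: eq_bigr => j /andP [/andP [hij _] _].
by rewrite subzn.
Qed.
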